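(* Let $r$ be a parameter (an integer or an indeterminate), and let $F_r=(f_{n,k})_{n,k\ge 0}$ be the $f$-matrix of the ordinary Riordan array $H_r=\left(\frac{1}{1-x},\frac{x(1+rx)}{1-x}\right)$, i.e. $F_r=H_r\cdot \mathbf{B}$, where $\mathbf{B}=\left(\binom{n}{k}\right)_{n,k\ge0}$. Then the bivariate generating function of $F_r$ is $$\sum_{n,k\ge 0} f_{n,k}x^ny^k=\frac{1}{1-(y+2)x-r(y+1)x^2},$$ and the bivariate generating function of the reversal $\left(f_{n,n-k}\right)_{0\le k\le n}$ of $F_r$ is $$\sum_{n\ge 0}\sum_{k=0}^n f_{n,n-k}x^ny^k=\frac{1}{1-(2y+1)x-ry(y+1)x^2}.$$
   Context: An ordinary Riordan array $(g(x),f(x))$, where $g(x)=1+g_1x+g_2x^2+\cdots$ and $f(x)=x+f_2x^2+\cdots$ are formal power series, is the lower-triangular matrix $(a_{n,k})_{n,k\ge0}$ with $a_{n,k}=[x^n]g(x)f(x)^k$. The binomial matrix $\mathbf{B}=\left(\binom{n}{k}\right)_{n,k\ge0}$ equals the Riordan array $\left(\frac{1}{1-x},\frac{x}{1-x}\right)$. For a lower-triangular matrix $M$ (here a Pascal-like matrix, i.e. $a_{n,0}=a_{n,n}=1$ and $a_{n,n-k}=a_{n,k}$), its $f$-matrix is the matrix product $M\cdot\mathbf{B}$. The reversal of a lower-triangular matrix $(a_{n,k})$ is the matrix whose $(n,k)$ entry is $a_{n,n-k}$ for $0\le k\le n$ (and $0$ for $k>n$). The bivariate generating function of $(a_{n,k})$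 is $\sum_{n,k}a_{n,k}x^ny^k$. *)

(* Defs.v *)
From HB Require Import structures.
From mathcomp Require Import all_boot all_order all_algebra.
Set Implicit Arguments. Unset Strict Implicit. Unset Printing Implicit Defensive.
Import GRing.Theory.
Local Open Scope ring_scope.

(* A formal power series is its coefficient sequence: a n = [x^n] a. *)
Definition fps (R : comNzRingType) := nat -> R.

Section FPS.
Variable R : comNzRingType.

Definition fps_one : fps R := fun n => (n == 0%N)%:R.
Definition fps_x : fps R := fun n => (n == 1%N)%:R.
Definition fps_add (a b : fps R) : fps R := fun n => a n + b n.
Definition fps_scale (c : R) (a : fps R) : fps R := fun n => c * a n.
Definition fps_mul (a b : fps R) : fps R :=
  fun n => \sum_(i < n.+1) a i * b (n - i)%N.
Definition fps_pow (a : fps R) (k : nat) : fps R := iter k (fps_mul a) fps_one.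
Definition fps_inv_1_sub_x : fps R := fun _ => 1.

Definition riordan (g f : fps R) (n k : nat) : R := fps_mul g (fps_pow f k) n.

Definition H_f (r : R) : fps R :=
  fps_mul (fps_mul fps_x (fps_add fps_one (fps_scale r fps_x))) fps_inv_1_sub_x.
Definition H (r : R) (n k : nat) : R := riordan fps_inv_1_sub_x (H_f r) n k.

Definition binom_mx (n k : nat) : R := 'C(n, k)%:R.

(* product M * B of lower-triangular matrices: (M B)_{n,k} = sum_{j<=n} M_{n,j} B_{j,k}
   (terms with j > n vanish since M is lower triangular) *)
Definition ltmx_mul (M N : nat -> nat -> R) (n k : nat) : R :=
  \sum_(j < n.+1) M n j * N j k.

Definition fmatrix (M : nat -> nat -> R) : nat -> nat -> R := ltmx_mul M binom_mx.

Definition reversal (M : nat -> nat -> R) (n k : nat) : R :=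
  if (k <= n)%N then M n (n - k)%N else 0.

Definition bfps := nat -> nat -> R.

Definition bfps_one : bfps := fun n k => ((n == 0%N) && (k == 0%N))%:R.
Definition bfps_x : bfps := fun n k => ((n == 1%N) && (k == 0%N))%:R.
Definition bfps_y : bfps := fun n k => ((n == 0%N) && (k == 1%N))%:R.
Definition bfps_const (c : R) : bfps := fun n k => c * bfps_one n k.
Definition bfps_add (a b : bfps) : bfps := fun n k => a n k + b n k.
Definition bfps_sub (a b : bfps) : bfps := fun n k => a n k - b n k.
Definition bfps_mul (a b : bfps) : bfps :=
  fun n k => \sum_(i < n.+1) \sum_(j < k.+1) a i j * b (n - i)%N (k - j)%N.

(* "F is the bivariate generating function 1/D", i.e. D * F = 1 in R[[x,y]] *)
Definition is_inverse_of (D F : bfps) : Prop :=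
  forall n k, bfps_mul D F n k = bfps_one n k.

End FPS.

(* Main.v *)
Require Import Defs.
From HB Require Import structures.
From mathcomp Require Import all_boot all_order all_algebra.
From mathcomp Require Import ring zify.
From Stdlib Require Import FunctionalExtensionality.
Import GRing.Theory.
Local Open Scope ring_scope.

Section S.
Variable R : comNzRingType.

Lemma sum_pred1 (N p : nat) (g : nat -> R) :
  \sum_(i < N) ((i : nat) == p)%:R * g i = if (p < N)%N then g p else 0.
Proof.
elim: N => [|N IH]; first by rewrite big_ord0.
rewrite big_ord_recr /= IH.
case: (ltngtP p N) => H.
- by rewrite ltnS ltnW // mul0r addr0.
- by rewrite ltnS leqNgt H /= mul0r addr0.
- by rewrite H ltnSn mul1r add0r.
Qed.

Lemma sum_lt (N M : nat) (g : nat -> R) : (M <= N)%N ->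
  \sum_(i < N) (i < M)%:R * g i = \sum_(i < M) g i.
Proof.
move=> HMN. rewrite (big_ord_widen N g HMN) [RHS]big_mkcond /=.
apply: eq_bigr => i _. by case: ifP => _; rewrite ?mul1r ?mul0r.
Qed.

Lemma andR (a b : bool) : ((a && b)%:R : R) = a%:R * b%:R.
Proof. by case: a; case: b; rewrite ?mul1r ?mul0r. Qed.

Definition mono (i j : nat) : bfps R := fun n k => ((n == i) && (k == j))%:R.

Lemma mul_monoE i j (a : bfps R) :
  bfps_mul (mono i j) a = fun n k => if (i <= n)%N && (j <= k)%N then a (n - i)%N (k - j)%N else 0.
Proof.
apply: functional_extensionality => n; apply: functional_extensionality => k.
rewrite /bfps_mul /mono.
under eq_bigr => i' _ do (under eq_bigr => j' _ do rewrite andR -mulrA; rewrite -mulr_sumr).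
rewrite (sum_pred1 n.+1 i (fun i' => \sum_(j' < k.+1) ((j' : nat) == j)%:R * a (n - i')%N (k - j')%N)).
rewrite (sum_pred1 k.+1 j (fun j' => a (n - i)%N (k - j')%N)).
by rewrite !ltnS; case: (i <= n)%N; case: (j <= k)%N.
Qed.

Lemma mul_addl (a b c : bfps R) : bfps_mul (bfps_add a b) c = bfps_add (bfps_mul a c) (bfps_mul b c).
Proof.
apply: functional_extensionality => n; apply: functional_extensionality => k.
rewrite /bfps_mul /bfps_add -big_split /=; apply: eq_bigr => i _.
rewrite -big_split /=; apply: eq_bigr => j _; by rewrite mulrDl.
Qed.

Lemma mul_subl (a b c : bfps R) : bfps_mul (bfps_sub a b) c = bfps_sub (bfps_mul a c) (bfps_mul b c).
Proof.
apply: functional_extensionality => n; apply: functional_extensionality => k.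
rewrite /bfps_mul /bfps_sub -sumrB /=; apply: eq_bigr => i _.
rewrite -sumrB /=; apply: eq_bigr => j _; by rewrite mulrBl.
Qed.

Lemma mul_scalel s (a c : bfps R) : bfps_mul (fun n k => s * a n k) c = fun n k => s * bfps_mul a c n k.
Proof.
apply: functional_extensionality => n; apply: functional_extensionality => k.
rewrite /bfps_mul mulr_sumr; apply: eq_bigr => i _.
rewrite mulr_sumr; apply: eq_bigr => j _; by rewrite mulrA.
Qed.

Lemma mono_mono i j p q : bfps_mul (mono i j) (mono p q) = mono (i + p) (j + q).
Proof.
rewrite mul_monoE.
apply: functional_extensionality => n; apply: functional_extensionality => k.
rewrite /mono. case: (leqP i n) => Hi; case: (leqP j k) => Hj /=.
- have -> : (n - i == p)%N = (n == i + p)%N by apply/eqP/eqP; lia.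
  have -> : (k - j == q)%N = (k == j + q)%N by apply/eqP/eqP; lia.
  done.
- have -> : (k == j + q)%N = false by apply/eqP; lia. by rewrite andbF.
- have -> : (n == i + p)%N = false by apply/eqP; lia. by [].
- have -> : (n == i + p)%N = false by apply/eqP; lia. by [].
Qed.

Lemma mul_addr (a b c : bfps R) : bfps_mul a (bfps_add b c) = bfps_add (bfps_mul a b) (bfps_mul a c).
Proof.
apply: functional_extensionality => n; apply: functional_extensionality => k.
rewrite /bfps_mul /bfps_add -big_split /=; apply: eq_bigr => i _.
rewrite -big_split /=; apply: eq_bigr => j _; by rewrite mulrDr.
Qed.

Lemma mul_scaler s (a c : bfps R) : bfps_mul a (fun n k => s * c n k) = fun n k => s * bfps_mul a c n k.
Proof.
apply: functional_extensionality => n; apply: functional_extensionality => k.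
rewrite /bfps_mul mulr_sumr; apply: eq_bigr => i _.
rewrite mulr_sumr; apply: eq_bigr => j _; by rewrite mulrCA.
Qed.

Lemma mono_scale_mono s i j p q :
  bfps_mul (fun n k => s * mono i j n k) (mono p q) = fun n k => s * mono (i + p) (j + q) n k.
Proof. by rewrite mul_scalel mono_mono. Qed.

Lemma mul_one_l (a : bfps R) : bfps_mul (mono 0 0) a = a.
Proof.
rewrite mul_monoE.
apply: functional_extensionality => n; apply: functional_extensionality => k.
by rewrite !subn0.
Qed.

End S.

Section HH.
Variable R : comNzRingType.
Variable r : R.

Notation f := (H_f r).
Definition P j m := fps_pow f j m.

Lemma f_val n : f n = (1 <= n)%:R + r * (2 <= n)%:R.
Proof.
have q_val : forall i, fps_mul (fps_x R) (fps_add (fps_one R) (fps_scale r (fps_x R))) i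
      = (i == 1)%:R + r * (i == 2)%:R.
  move=> i; rewrite /fps_mul /fps_x /fps_add /fps_one /fps_scale.
  rewrite (sum_pred1 R i.+1 1 (fun a => ((i - a)%N == 0%N)%:R + r * ((i - a)%N == 1%N)%:R)).
  case: i => [|[|[|i]]] //=; rewrite ?mulr0 ?addr0 ?add0r //.
rewrite /H_f /fps_mul /fps_inv_1_sub_x.
under eq_bigr => i _ do rewrite mulr1.
rewrite (eq_bigr (fun i : 'I_n.+1 => ((i : nat) == 1)%:R * 1 + r * (((i : nat) == 2)%:R * 1))); last first.
  by move=> i _; rewrite -/(fps_mul _ _ i) q_val !mulr1.
rewrite big_split /= -mulr_sumr.
rewrite (sum_pred1 R n.+1 1 (fun _ => 1)) (sum_pred1 R n.+1 2 (fun _ => 1)).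
by rewrite !ltnS; case: (1 <= n)%N; case: (2 <= n)%N.
Qed.

Lemma P0 m : P 0 m = (m == 0)%:R.
Proof. by []. Qed.

Lemma PS j m : P j.+1 m = \sum_(i < m.+1) f i * P j (m - i).
Proof. by []. Qed.

Lemma Pzero j m : (m < j)%N -> P j m = 0.
Proof.
elim: j m => [//|j IH] m Hm.
rewrite PS big1 // => i _.
case: (posnP i) => Hi.
  by rewrite Hi f_val /= !(mulr0, mul0r, addr0).
rewrite IH ?mulr0 //. case: i Hi => i /= Hib Hi; lia.
Qed.

Lemma HE n j : H r n j = \sum_(i < n.+1) P j i.
Proof.
rewrite /H /riordan /fps_mul /fps_inv_1_sub_x.
rewrite (reindex_inj rev_ord_inj) /=; apply: eq_bigr => i _.
by rewrite mul1r /P; congr fps_pow; rewrite subSS subKn // -ltnS.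
Qed.

Lemma H0 n : H r n 0 = 1.
Proof.
rewrite HE.
rewrite (eq_bigr (fun i : 'I_n.+1 => ((i : nat) == 0)%:R * 1)) //.
  by rewrite (sum_pred1 R n.+1 0 (fun _ => 1)).
by move=> i _; rewrite mulr1.
Qed.

Lemma Hz n j : (n < j)%N -> H r n j = 0.
Proof.
move=> Hnj; rewrite HE big1 // => i _; apply: Pzero.
have := ltn_ord i; lia.
Qed.

Lemma Hstep n j : H r n.+1 j = H r n j + P j n.+1.
Proof. by rewrite !HE big_ord_recr. Qed.

Lemma Pstep j m : P j.+1 m.+1 = H r m j + r * (if m is m'.+1 then H r m' j else 0).
Proof.
rewrite PS (reindex_inj rev_ord_inj) /=.
rewrite (eq_bigr (fun i : 'I_m.+2 => ((i : nat) < m.+1)%:R * P j i + r * (((i : nat) < m)%:R * P j i))); last first.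
  move=> i _; rewrite !subSS subKn; last by have := ltn_ord i; lia.
  rewrite f_val mulrDl -mulrA.
  have -> : (0 < m.+1 - i)%N = (i < m.+1)%N by apply/idP/idP; lia.
  have -> : (1 < m.+1 - i)%N = (i < m)%N by apply/idP/idP; lia.
  by [].
rewrite big_split /= -mulr_sumr.
rewrite (sum_lt R m.+2 m.+1 (P j)) // (sum_lt R m.+2 m (P j)) //.
rewrite HE; case: m => [|m]; first by rewrite big_ord0 mulr0.
by rewrite HE.
by rewrite leqW.
Qed.

Lemma Hrec n j : H r n.+1 j.+1 = H r n j.+1 + H r n j + r * (if n is n'.+1 then H r n' j else 0).
Proof. by rewrite Hstep Pstep addrA. Qed.

Notation F := (fmatrix (H r)).

Lemma FE n k : F n k = \sum_(j < n.+1) H r n j * 'C(j, k)%:R.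
Proof. by []. Qed.

Lemma F0 k : F 0 k = (k == 0)%:R.
Proof. by rewrite FE big_ord_recl big_ord0 addr0 H0 mul1r /= bin0n. Qed.

Lemma Fz n k : (n < k)%N -> F n k = 0.
Proof.
move=> Hnk; rewrite FE big1 // => j _.
by rewrite bin_small ?mulr0 //; have := ltn_ord j; lia.
Qed.

Lemma partB n k : \sum_(j < n.+1) H r n j * 'C(j.+1, k)%:R
   = F n k + (if k is k'.+1 then F n k' else 0).
Proof.
case: k => [|k].
  by rewrite addr0 FE; apply: eq_bigr => j _; rewrite !bin0.
rewrite !FE -big_split /=; apply: eq_bigr => j _.
by rewrite binS natrD mulrDr.
Qed.

Lemma partA n k : 'C(0, k)%:R + \sum_(j < n.+1) H r n j.+1 * 'C(j.+1, k)%:R = F n k.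
Proof.
rewrite big_ord_recr /= Hz // mul0r addr0.
by rewrite FE big_ord_recl H0 mul1r.
Qed.

Lemma partC n k : \sum_(j < n.+1) (if n is n'.+1 then H r n' j else 0) * 'C(j.+1, k)%:R
   = (if n is n'.+1 then F n' k + (if k is k'.+1 then F n' k' else 0) else 0).
Proof.
case: n => [|n]; first by rewrite big1 // => j _; rewrite mul0r.
by rewrite big_ord_recr /= Hz // mul0r addr0 partB.
Qed.

Lemma Frec n k : F n.+1 k = 2 * F n k + (if k is k'.+1 then F n k' else 0)
   + r * (if n is n'.+1 then F n' k + (if k is k'.+1 then F n' k' else 0) else 0).
Proof.
rewrite FE big_ord_recl H0 mul1r /=.
under eq_bigr => j _ do rewrite /bump /= add1n Hrec !mulrDl -mulrA.
rewrite !big_split /= -mulr_sumr.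
rewrite partB partC !addrA (partA n k).
set a := F n k. set b := (match k with 0%N => 0 | _ => _ end).
set c := (match n with 0%N => 0 | _ => _ end). ring.
Qed.

End HH.

Lemma oneE (R : comNzRingType) : bfps_one R = mono R 0 0. Proof. by []. Qed.
Lemma xE (R : comNzRingType) : bfps_x R = mono R 1 0. Proof. by []. Qed.
Lemma yE (R : comNzRingType) : bfps_y R = mono R 0 1. Proof. by []. Qed.
Lemma cE (R : comNzRingType) (s : R) : bfps_const s = fun n k => s * mono R 0 0 n k. Proof. by []. Qed.

Theorem proposition2 (R : comNzRingType) (r : R) :
  let F := fmatrix (H r) in
  let x := bfps_x R in
  let y := bfps_y R in
  let c := @bfps_const R in
  (* 1/(1 - (y+2)x - r(y+1)x^2) *)
  is_inverse_of
    (bfps_sub (bfps_sub (bfps_one R) (bfps_mul (bfps_add y (c 2)) x))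
       (bfps_mul (c r) (bfps_mul (bfps_add y (c 1)) (bfps_mul x x))))
    F
  /\
  (* 1/(1 - (2y+1)x - r y(y+1)x^2) *)
  is_inverse_of
    (bfps_sub (bfps_sub (bfps_one R) (bfps_mul (bfps_add (bfps_mul (c 2) y) (c 1)) x))
       (bfps_mul (c r) (bfps_mul (bfps_mul y (bfps_add y (c 1))) (bfps_mul x x))))
    (reversal F).
Proof.
cbv zeta.
rewrite !cE !xE !yE !oneE.
rewrite !(mul_addl, mul_addr, mul_scalel, mul_scaler, mono_mono, mono_scale_mono, mul_one_l).
split=> n k.
- rewrite !(mul_subl, mul_addl, mul_scalel, mul_monoE) /bfps_sub /bfps_add /=.
  rewrite !(add0n, addn0, subn0) /bfps_one.
  case: n => [|n].
    by rewrite F0 /= !mulr0 !addr0 !subr0 mulr0 subr0.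
  rewrite Frec !(add1n, subSS, subn0, ltnS, leq0n) /=.
  case: n => [|n]; case: k => [|k]; rewrite /= ?(subSS, subn0, ltnS, leq0n) /=.
  all: rewrite ?(addr0, add0r, mul1r, mulr0); try ring.
- rewrite !(mul_subl, mul_addl, mul_scalel, mul_monoE) /bfps_sub /bfps_add /=.
  rewrite !(add0n, addn0, subn0) /bfps_one /reversal.
  case: n => [|[|n]]; case: k => [|[|k]]; rewrite /= ?(subSS, subn0, ltnS, leq0n, add1n) /=.
  - by rewrite F0 /= !(mulr0, addr0, subr0).
  - by rewrite !(mulr0, addr0, subr0).
  - by rewrite !(mulr0, addr0, subr0).
  - rewrite Frec (@Fz R r _ _ (ltnSn 0)) /=; ring.
  - rewrite Frec /=; ring.
  - by rewrite !(mulr0, addr0, subr0).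
  - rewrite Frec (@Fz R r _ _ (ltnSn n.+1)) (@Fz R r _ _ (ltnSn n)) (@Fz R r _ _ (ltnW (ltnSn n.+1))) /=; ring.
  - rewrite Frec (@Fz R r _ _ (ltnSn n)) /=; ring.
  - case: (leqP k n) => Hkn; last first.
      have -> : (k < n)%N = false by apply/negbTE; rewrite -leqNgt ltnW.
      by rewrite !(mulr0, addr0, subr0).
    have [m Hm] : exists m, n = (k + m)%N by exists (n - k)%N; lia.
    subst n; clear Hkn. rewrite addKn.
    case: m => [|m].
      rewrite addn0 ltnn Frec /=; ring.
    have -> : (k < k + m.+1)%N by lia.
    have -> : (k + m.+1 - k.+1 = m)%N by lia.
    rewrite Frec /=; ring.
Qed.
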